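(* Let $\Pi$ be an $n$-dimensional linear space satisfying the exchange axiom and the axiom (P2), let $0<k<n-1$, let $B=\{p_1,\dots,p_{n+1}\}$ be a base of $\Pi$, and let $\mathcal{B}_k$ be the base subset of $\mathcal{G}_k(\Pi)$ associated with $B$. A subset $\mathcal{R}\subset\mathcal{B}_k$ is exact if and only if $S_i(\mathcal{R})=\{p_i\}$ for every $i\in\{1,\dots,n+1\}$.
   Context: A linear space $\Pi=(P,\mathcal{L})$ is a set $P$ of points with a family $\mathcal{L}$ of proper subsets (lines) such that each line has at least two points and any two distinct points $p,q$ lie on exactly one line $pq$. A subspace is a set $S\subset P$ with $pq\subset S$ for all distinct $p,q\in S$; $\overline{X}$ is the smallest subspace containing $X$. A set $X$ is independent if $\overline{X}$ is not spanned by a proper subset of $X$; a base of $\Pi$ is an independent set spanning $P$. A subspace is $m$-dimensional if $m+1$ is the smallest number of points spanning it. Exchange axiom: for every $X\subset P$ and $p_1,p_2\in P\setminus\overline{X}$, $p_2\in\overline{X\cup\{p_1\}}$ implies $p_1\in\overline{X\cup\{p_2\}}$. Axiom (P2): every line has at least three points. $\mathcal{G}_k(\Pi)$ is the set of $k$-dimensional subspaces; the base subset of $\mathcal{G}_k(\Pi)$ associated with a base $B$ is the set of all $k$-dimensional subspaces spanned by points of $B$. A subset $\mathcal{R}\subset\mathcal{B}_k$ is exact if $\mathcal{B}_k$ is the unique base subset of $\mathcal{G}_k(\Pi)$ containing $\mathcal{R}$, and inexact otherwise. $S_i(\mathcal{R})$ denotes the intersection of all elements of $\mathcal{R}$ containing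 $p_i$ (the intersection of the empty family being $P$). *)

(* Defs.v *)
From Stdlib Require Import List Arith.

Section LinearSpaces.
Variable P : Type.
Variable L : (P -> Prop) -> Prop.

Definition same_set (A B : P -> Prop) : Prop := forall x, A x <-> B x.
Definition subset (A B : P -> Prop) : Prop := forall x, A x -> B x.

Definition linear_space : Prop :=
  (forall l, L l -> exists x, ~ l x) /\
  (forall l, L l -> exists x y, x <> y /\ l x /\ l y) /\
  (forall p q, p <> q -> exists l, L l /\ l p /\ l q) /\
  (forall p q l l', p <> q -> L l -> L l' -> l p -> l q -> l' p -> l' q ->
       same_set l l').

Definition line_through (p q : P) : P -> Prop :=
  fun x => exists l, L l /\ l p /\ l q /\ l x.

Definition subspace (S : P -> Prop) : Prop :=
  forall p q, S p -> S q -> p <> q -> subset (line_through p q) S.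

Definition closure (X : P -> Prop) : P -> Prop :=
  fun x => forall S, subspace S -> subset X S -> S x.

Definition independent (X : P -> Prop) : Prop :=
  forall Y, subset Y X -> (exists x, X x /\ ~ Y x) ->
    ~ same_set (closure Y) (closure X).

Definition is_base (X : P -> Prop) : Prop :=
  independent X /\ same_set (closure X) (fun _ => True).

(* S is an m-dimensional subspace: m+1 is the least number of points spanning S *)
Definition dimension (S : P -> Prop) (m : nat) : Prop :=
  subspace S /\
  (exists l : list P, length l = Datatypes.S m /\ same_set (closure (fun x => In x l)) S) /\
  (forall l : list P, same_set (closure (fun x => In x l)) S -> Datatypes.S m <= length l).

Definition exchange_axiom : Prop :=
  forall (X : P -> Prop) (p1 p2 : P),
    ~ closure X p1 -> ~ closure X p2 ->
    closure (fun x => X x \/ x = p1) p2 ->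
    closure (fun x => X x \/ x = p2) p1.

Definition axiom_P2 : Prop :=
  forall l, L l -> exists a b c, l a /\ l b /\ l c /\ a <> b /\ a <> c /\ b <> c.

Definition base_subset (k : nat) (B : P -> Prop) : (P -> Prop) -> Prop :=
  fun S => dimension S k /\ exists Y, subset Y B /\ same_set (closure Y) S.

(* R (a subset of the base subset associated with B) is exact:
   it is contained in no other base subset of G_k *)
Definition exact (k : nat) (B : P -> Prop) (R : (P -> Prop) -> Prop) : Prop :=
  forall B', is_base B' ->
    (forall S, R S -> base_subset k B' S) ->
    forall S, base_subset k B' S <-> base_subset k B S.

Definition S_of (R : (P -> Prop) -> Prop) (p : P) : P -> Prop :=
  fun x => forall S, R S -> S p -> S x.

End LinearSpaces.

Arguments same_set {P}. Arguments subset {P}. Arguments linear_space {P}. Arguments line_through {P}. Arguments subspace {P}. Arguments closure {P}. Arguments independent {P}. Arguments is_base {P}. Arguments dimension {P}. Arguments exchange_axiom {P}. Arguments axiom_P2 {P}. Arguments base_subset {P}. Arguments exact {P}. Arguments S_of {P}.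

(* Main.v *)
Require Import Defs.
From Stdlib Require Import List Arith Lia Classical ClassicalEpsilon.

Section Helpers.

Lemma cl_ext {P} (L : (P -> Prop) -> Prop) (X : P -> Prop) x : X x -> closure L X x.
Proof. intros Hx S _ HS. apply HS, Hx. Qed.

Lemma cl_min {P} (L : (P -> Prop) -> Prop) (X S : P -> Prop) :
  subspace L S -> subset X S -> subset (closure L X) S.
Proof. intros HS HXS x Hx. apply Hx; assumption. Qed.

Lemma cl_subspace {P} (L : (P -> Prop) -> Prop) (X : P -> Prop) : subspace L (closure L X).
Proof.
  intros a b Ha Hb Hab z Hz S HS HXS.
  apply (HS a b (Ha S HS HXS) (Hb S HS HXS) Hab z Hz).
Qed.

Lemma cl_sub {P} (L : (P -> Prop) -> Prop) (X Y : P -> Prop) :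
  subset X (closure L Y) -> subset (closure L X) (closure L Y).
Proof. intros H. apply cl_min; [apply cl_subspace | exact H]. Qed.

Lemma cl_mono {P} (L : (P -> Prop) -> Prop) (X Y : P -> Prop) :
  subset X Y -> subset (closure L X) (closure L Y).
Proof. intros H. apply cl_sub. intros x Hx. apply cl_ext, H, Hx. Qed.

Lemma line_in {P} (L : (P -> Prop) -> Prop) (S : P -> Prop) a b c l :
  subspace L S -> S a -> S b -> a <> b -> L l -> l a -> l b -> l c -> S c.
Proof.
  intros HS Ha Hb Hab Hl la lb lc.
  apply (HS a b Ha Hb Hab c). exists l. auto.
Qed.

Lemma cl_empty {P} (L : (P -> Prop) -> Prop) (X : P -> Prop) x :
  (forall z, ~ X z) -> ~ closure L X x.
Proof.
  intros HX Hx. apply (Hx (fun _ => False)).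
  - intros a b Ha. destruct Ha.
  - intros z Hz. apply (HX z Hz).
Qed.

Lemma finitary {P} (L : (P -> Prop) -> Prop) (X : P -> Prop) x :
  closure L X x -> exists F, (forall f, In f F -> X f) /\ closure L (fun z => In z F) x.
Proof.
  intros Hx. apply Hx.
  - intros a b [Fa [HFa Ha]] [Fb [HFb Hb]] Hab z Hz.
    exists (Fa ++ Fb). split.
    + intros f Hf. apply in_app_or in Hf. destruct Hf; auto.
    + refine (cl_subspace L _ a b _ _ Hab z Hz).
      * apply (cl_mono L (fun z => In z Fa)); auto. intros y Hy. apply in_or_app; auto.
      * apply (cl_mono L (fun z => In z Fb)); auto. intros y Hy. apply in_or_app; auto.
  - intros z Hz. exists (z :: nil). split.
    + intros f [Hf|[]]. subst; auto.
    + apply cl_ext. left; auto.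
Qed.

Lemma indep_use {P} (L : (P -> Prop) -> Prop) (I Y : P -> Prop) b :
  independent L I -> I b -> (forall y, Y y -> I y /\ y <> b) -> ~ closure L Y b.
Proof.
  intros HI Hb HY Hc.
  apply (HI (fun z => I z /\ z <> b)).
  - intros z [Hz _]; exact Hz.
  - exists b. split; auto. intros [_ H]; auto.
  - intros z. split.
    + apply cl_mono. intros y [Hy _]; auto.
    + apply cl_sub. intros y Hy. destruct (classic (y = b)) as [->|Hne].
      * apply (cl_mono L Y (fun z => I z /\ z <> b)); [intros w Hw; apply HY, Hw | exact Hc].
      * apply cl_ext. auto.
Qed.

Lemma core {P} (L : (P -> Prop) -> Prop) (Hexch : exchange_axiom L) (I Y : P -> Prop) x :
  independent L I -> subset Y I -> closure L Y x ->
  forall F, (forall f, In f F -> I f) -> forall Z : P -> Prop, subset Z Y ->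
  closure L (fun z => In z F \/ Z z) x ->
  closure L (fun z => (In z F /\ Y z) \/ Z z) x.
Proof.
  intros HI HYI HYx F. induction F as [|f F IH]; intros HF Z HZ Hx.
  - revert Hx. apply cl_mono. intros z [[]|Hz]; auto.
  - destruct (classic (Y f)) as [Yf|nYf].
    + assert (H := IH (fun g Hg => HF g (or_intror Hg)) (fun z => Z z \/ z = f)).
      assert (Hc : closure L (fun z => (In z F /\ Y z) \/ (Z z \/ z = f)) x).
      { apply H.
        - intros z [Hz| ->]; auto.
        - revert Hx. apply cl_mono. intros z [[Hz|Hz]|Hz]; auto. }
      revert Hc. apply cl_mono. intros z [[Hz1 Hz2]|[Hz| ->]].
      * left. split; [right|]; auto.
      * right; auto.
      * left. split; [left|]; auto.
    + set (X := fun z => In z F \/ Z z).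
      destruct (classic (closure L X x)) as [HXx|nHXx].
      * assert (Hc := IH (fun g Hg => HF g (or_intror Hg)) Z HZ HXx).
        revert Hc. apply cl_mono. intros z [[Hz1 Hz2]|Hz]; [left; split; [right|]|right]; auto.
      * assert (nXf : ~ closure L X f).
        { intros HXf. apply nHXx. revert Hx. apply cl_sub.
          intros z [[Hz|Hz]|Hz].
          - subst; auto.
          - apply cl_ext. left; auto.
          - apply cl_ext. right; auto. }
        assert (Hx' : closure L (fun z => X z \/ z = f) x).
        { revert Hx. apply cl_mono. intros z [[Hz|Hz]|Hz].
          - right; auto.
          - left; left; auto.
          - left; right; auto. }
        assert (He := Hexch X f x nXf nHXx Hx').
        exfalso. apply (indep_use L I (fun z => I z /\ z <> f) f HI (HF f (or_introl eq_refl))).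
        { intros y Hy; exact Hy. }
        revert He. apply cl_sub. intros z [Hz| ->].
        -- apply cl_ext. split.
           ++ destruct Hz as [Hz|Hz]; [apply HF; right; auto| apply HYI, HZ, Hz].
           ++ intros ->. apply nXf, cl_ext, Hz.
        -- revert HYx. apply cl_mono. intros y Hy. split; [apply HYI, Hy|].
           intros ->. auto.
Qed.

Lemma filter_lt {A} (g : A -> bool) (F : list A) :
  (exists f, In f F /\ g f = false) -> length (filter g F) < length F.
Proof.
  induction F as [|a F IH]; intros [f [Hf Hg]]; [destruct Hf|].
  simpl. destruct Hf as [->|Hf].
  - rewrite Hg. pose proof (filter_length_le g F). lia.
  - destruct (g a); simpl.
    + assert (length (filter g F) < length F) by (apply IH; eauto). lia.
    + pose proof (filter_length_le g F). lia.
Qed.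

Definition dec {P} (Y : P -> Prop) (z : P) : bool :=
  if excluded_middle_informative (Y z) then true else false.

Lemma meet {P} (L : (P -> Prop) -> Prop) (Hexch : exchange_axiom L) (I : P -> Prop)
  (T : (P -> Prop) -> Prop) x :
  independent L I -> (forall S, T S -> S x) ->
  (forall S, T S -> exists Y, subset Y I /\ same_set (closure L Y) S) ->
  forall m F, length F <= m -> (forall f, In f F -> I f) ->
  closure L (fun z => In z F) x ->
  exists F', (forall f, In f F' -> I f) /\ closure L (fun z => In z F') x /\
    forall S, T S -> forall y, closure L (fun z => In z F') y -> S y.
Proof.
  intros HI HTx HTY m. induction m as [|m IH]; intros F HlF HF Hx.
  - destruct F; [|simpl in HlF; lia].
    exfalso. apply (cl_empty L _ x (fun z (H : In z nil) => H) Hx).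
  - destruct (classic (forall S, T S -> forall y, closure L (fun z => In z F) y -> S y)) as [Hall|Hn].
    + exists F; auto.
    + apply not_all_ex_not in Hn. destruct Hn as [S HS].
      apply imply_to_and in HS. destruct HS as [TS HS].
      destruct (HTY S TS) as [Y [HYI HYS]].
      assert (Hex : exists f, In f F /\ dec Y f = false).
      { apply NNPP. intros Hne. apply HS. intros y Hy. apply (proj1 (HYS y)).
        revert Hy. apply cl_mono. intros z Hz. unfold dec in Hne.
        destruct (excluded_middle_informative (Y z)); auto.
        exfalso. apply Hne. exists z. split; [exact Hz|].
        unfold dec. destruct (excluded_middle_informative (Y z)); [contradiction|reflexivity]. }
      set (F2 := filter (dec Y) F).
      assert (Hlt : length F2 < length F) by (apply filter_lt; auto).
      apply (IH F2); [lia| |].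
      * intros f Hf. apply filter_In in Hf. apply HF, Hf.
      * assert (Hc := core L Hexch I Y x HI HYI (proj2 (HYS x) (HTx S TS)) F HF
                        (fun _ => False) (fun _ H => match H with end)).
        assert (Hc' : closure L (fun z => (In z F /\ Y z) \/ False) x).
        { apply Hc. revert Hx. apply cl_mono. intros z Hz; left; auto. }
        revert Hc'. apply cl_mono. intros z [[Hz1 Hz2]|[]].
        apply filter_In. split; auto. unfold dec.
        destruct (excluded_middle_informative (Y z)); auto.
Qed.

Lemma len_le2 (l : list nat) i j : NoDup l -> (forall x, In x l -> x = i \/ x = j) -> length l <= 2.
Proof.
  intros Hnd Hl. destruct l as [|a [|b [|c l]]]; simpl; try lia.
  exfalso.
  inversion Hnd as [|? ? Ha Hnd2]; subst.
  inversion Hnd2 as [|? ? Hb _]; subst.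
  assert (a <> b) by (intros ->; apply Ha; left; auto).
  assert (a <> c) by (intros ->; apply Ha; right; left; auto).
  assert (b <> c) by (intros ->; apply Hb; left; auto).
  assert (Ha' := Hl a (or_introl eq_refl)).
  assert (Hb' := Hl b (or_intror (or_introl eq_refl))).
  assert (Hc' := Hl c (or_intror (or_intror (or_introl eq_refl)))).
  destruct Ha', Hb', Hc'; subst; congruence.
Qed.

Lemma len_ge2 (l : list nat) i j : i <> j -> In i l -> In j l -> 2 <= length l.
Proof.
  intros Hij Hi Hj. destruct l as [|a [|b l]]; simpl in *; try lia;
  repeat match goal with H : _ \/ _ |- _ => destruct H end; subst; try contradiction; try congruence.
Qed.

End Helpers.

(* Points p 0, ..., p n play the role of p_1, ..., p_{n+1}. *)
Theorem lemma2p2 (P : Type) (L : (P -> Prop) -> Prop) (n k : nat)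
  (HL : linear_space L)
  (Hdim : dimension L (fun _ => True) n)
  (Hexch : exchange_axiom L)
  (HP2 : axiom_P2 L)
  (Hk0 : 0 < k) (Hk : k < n - 1)
  (p : nat -> P)
  (Hinj : forall i j, i <= n -> j <= n -> p i = p j -> i = j)
  (Hbase : is_base L (fun x => exists i, i <= n /\ x = p i))
  (R : (P -> Prop) -> Prop)
  (HR : forall S, R S -> base_subset L k (fun x => exists i, i <= n /\ x = p i) S) :
  exact L k (fun x => exists i, i <= n /\ x = p i) R <->
  (forall i, i <= n -> forall x, S_of R (p i) x <-> x = p i).
Proof.
  set (B := fun x => exists i, i <= n /\ x = p i) in *.
  destruct Hbase as [HBind HBspan].
  assert (indepB : forall m Y, m <= n -> (forall y, Y y -> B y /\ y <> p m) -> ~ closure L Y (p m)).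
  { intros m Y Hm HY. apply (indep_use L B Y (p m) HBind); [exists m; auto|exact HY]. }
  split.
  - intros Hex i Hi x. split; [|intros ->; intros S _ H; exact H].
    intros Hx. apply NNPP; intros Hxi.
    destruct (finitary L B x (proj2 (HBspan x) I)) as [F0 [HF0 HF0x]].
    destruct (meet L Hexch B (fun S => R S /\ S (p i)) x HBind
       (fun S HS => Hx S (proj1 HS) (proj2 HS))
       (fun S HS => proj2 (HR S (proj1 HS))) (length F0) F0 (le_n _) HF0 HF0x)
       as [F [HF [HFx HFT]]].
    destruct (classic (exists f, In f F /\ f <> p i)) as [[f [Hf Hfi]]|Hno].
    2: { apply Hxi. apply (cl_min L (fun z => In z F) (fun z => z = p i)); [| |exact HFx].
         - intros a b Ha Hb Hab. exfalso. apply Hab. congruence.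
         - intros z Hz. apply NNPP; intros Hz'; apply Hno; exists z; auto. }
    destruct (HF f Hf) as [j [Hj ->]].
    assert (Hji : j <> i) by (intros ->; auto).
    assert (Hpij : p i <> p j) by (intros E; apply Hji; symmetry; apply Hinj; auto).
    assert (Hpji : p j <> p i) by (intros E; apply Hpij; auto).
    assert (HpjS : forall S, R S -> S (p i) -> S (p j)).
    { intros S RS Si; apply (HFT S (conj RS Si)); apply cl_ext; exact Hf. }
    destruct HL as [_ [_ [Hline _]]].
    destruct (Hline (p i) (p j) Hpij) as [l [Hl [lpi lpj]]].
    destruct (HP2 l Hl) as [a [b [c [la [lb [lc [Hab [Hac Hbc]]]]]]]].
    assert (Hq : exists q, l q /\ q <> p i /\ q <> p j).
    { destruct (classic (a <> p i /\ a <> p j)) as [H1|H1]; [exists a; tauto|].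
      destruct (classic (b <> p i /\ b <> p j)) as [H2|H2]; [exists b; tauto|].
      exists c. apply not_and_or in H1. apply not_and_or in H2.
      destruct H1 as [H1|H1]; apply NNPP in H1; destruct H2 as [H2|H2]; apply NNPP in H2;
      split; auto; split; intros E; congruence. }
    destruct Hq as [q [lq [Hqi Hqj]]].
    assert (Hpjq : p j <> q) by (intros E; apply Hqj; auto).
    set (B' := fun z => (exists m, m <= n /\ m <> i /\ z = p m) \/ z = q).
    assert (HB'cl : forall z, closure L B' z).
    { intros z. apply (cl_sub L B B'); [|apply HBspan; exact I].
      intros y [m [Hm ->]]. destruct (Nat.eq_dec m i) as [->|Hmi].
      - apply (line_in L _ (p j) q (p i) l (cl_subspace L B')); auto.
        + apply cl_ext. left. exists j; auto.
        + apply cl_ext. right; auto.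
      - apply cl_ext. left. exists m; auto. }
    assert (HB'ind : independent L B').
    { intros Y HY [b' [HB'b HnYb]] Hsame.
      assert (HYall : forall z, closure L Y z) by (intros z; apply (proj2 (Hsame z)); apply HB'cl).
      destruct (classic (Y q)) as [Yq|nYq].
      - destruct HB'b as [[m [Hm [Hmi ->]]]| ->]; [|contradiction].
        set (W := fun z => (exists m', m' <= n /\ z = p m') /\ z <> p i /\ z <> p m).
        assert (HYW : subset Y (fun z => W z \/ z = q)).
        { intros y Hy. destruct (HY y Hy) as [[m' [Hm' [Hm'i ->]]]| ->]; [left|right; auto].
          split; [exists m'; auto|split].
          - intros E. apply Hm'i. apply Hinj; auto.
          - intros E. apply HnYb. rewrite <- E. exact Hy. }
        assert (Hbq : closure L (fun z => W z \/ z = q) (p m)) by (apply (cl_mono L Y); auto).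
        assert (nWb : ~ closure L W (p m)).
        { apply indepB; auto. intros y [Hy [_ Hy2]]. split; auto. }
        assert (nWq : ~ closure L W q).
        { intros Wq. apply nWb. revert Hbq. apply cl_sub. intros z [Hz| ->]; [apply cl_ext; auto|auto]. }
        assert (He := Hexch W q (p m) nWq nWb Hbq).
        apply (indepB i (fun z => W z \/ z = p m) Hi).
        + intros y [[Hy [Hy1 _]]| ->]; split; auto; try (exists m; auto; fail);
          intros E; apply Hmi; apply Hinj; auto.
        + apply (line_in L _ (p j) q (p i) l (cl_subspace L _)); auto.
          destruct (classic (p j = p m)) as [E|E]; apply cl_ext; [right; auto|left].
          split; [exists j; auto|split; auto].
      - apply (indepB i Y Hi); [|apply HYall].
        intros y Hy. destruct (HY y Hy) as [[m [Hm [Hmi ->]]]| ->]; [|contradiction].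
        split; [exists m; auto|]. intros E. apply Hmi. apply Hinj; auto. }
    assert (HRB' : forall S, R S -> base_subset L k B' S).
    { intros S RS. destruct (HR S RS) as [HdS [X [HXB HXS]]]. split; [exact HdS|].
      assert (HSsub : subspace L S) by (apply HdS).
      destruct (classic (S (p i))) as [Si|nSi].
      - assert (Sj := HpjS S RS Si).
        assert (Xj : X (p j)).
        { apply NNPP. intros nXj. apply (indepB j X Hj); [|apply (proj2 (HXS _)); exact Sj].
          intros y Hy. split; [apply HXB; auto|]. intros ->; contradiction. }
        exists (fun z => (X z /\ z <> p i) \/ z = q). split.
        + intros y [[Hy Hyi]| ->]; [left|right; auto]. destruct (HXB y Hy) as [m [Hm ->]].
          exists m. split; [auto|split; [intros ->; contradiction|reflexivity]].
        + intros z. split.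
          * apply cl_min; auto. intros y [[Hy _]| ->].
            -- apply (proj1 (HXS y)). apply cl_ext; auto.
            -- apply (line_in L S (p i) (p j) q l); auto.
          * intros Sz. apply (proj2 (HXS z)) in Sz. revert Sz. apply cl_sub. intros y Hy.
            destruct (classic (y = p i)) as [->|Hyi].
            -- apply (line_in L _ (p j) q (p i) l (cl_subspace L _)); auto.
               ++ apply cl_ext. left. split; auto.
               ++ apply cl_ext. right; auto.
            -- apply cl_ext. left; auto.
      - exists X. split; auto. intros y Hy. destruct (HXB y Hy) as [m [Hm ->]]. left.
        exists m. split; [auto|split; [|reflexivity]]. intros ->. apply nSi. apply (proj1 (HXS _)).
        apply cl_ext; auto. }
    set (g := fun m => andb (negb (Nat.eqb m i)) (negb (Nat.eqb m j))).
    set (others := filter g (seq 0 (S n))).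
    assert (Hoth : forall m, In m others <-> m <= n /\ m <> i /\ m <> j).
    { intros m. unfold others. rewrite filter_In, in_seq. unfold g.
      rewrite Bool.andb_true_iff, !Bool.negb_true_iff, !Nat.eqb_neq. split; intros; lia. }
    assert (Hlen : length others = n - 1).
    { pose proof (filter_length g (seq 0 (S n))) as Hfl. rewrite length_seq in Hfl.
      assert (H1 : length (filter (fun x => negb (g x)) (seq 0 (S n))) <= 2).
      { apply (len_le2 _ i j). apply NoDup_filter, seq_NoDup. intros x0 Hx0.
        apply filter_In in Hx0. destruct Hx0 as [_ Hx0]. unfold g in Hx0.
        destruct (Nat.eqb_spec x0 i); destruct (Nat.eqb_spec x0 j); simpl in Hx0; auto; discriminate. }
      assert (H2 : 2 <= length (filter (fun x => negb (g x)) (seq 0 (S n)))).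
      { apply (len_ge2 _ i j); [auto| |].
        - apply filter_In; split; [apply in_seq; lia|]. unfold g. rewrite Nat.eqb_refl. reflexivity.
        - apply filter_In; split; [apply in_seq; lia|]. unfold g. rewrite Nat.eqb_refl, Bool.andb_false_r. reflexivity. }
      unfold others. lia. }
    set (M := firstn k others). set (rest := skipn k others).
    assert (HMlen : length M = k) by (apply firstn_length_le; lia).
    assert (Hrlen : length rest = n - 1 - k) by (unfold rest; rewrite length_skipn; lia).
    assert (HMr : forall m, In m others <-> In m M \/ In m rest).
    { intros m. pose proof (firstn_skipn k others) as E. fold M rest in E.
      rewrite <- E at 1. rewrite in_app_iff. tauto. }
    set (X0 := p i :: map p M). set (C := p j :: map p rest).
    set (S0 := closure L (fun z => In z X0)).
    assert (HX0 : forall z, In z X0 -> exists m, m <= n /\ m <> j /\ z = p m).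
    { intros z [<-|Hz]; [exists i; auto|].
      apply in_map_iff in Hz. destruct Hz as [m [<- Hm]]. exists m.
      assert (Hmo : In m others) by (apply HMr; auto). apply Hoth in Hmo. tauto. }
    assert (S0i : S0 (p i)) by (apply cl_ext; left; auto).
    assert (nS0j : ~ S0 (p j)).
    { apply indepB; auto. intros y Hy. destruct (HX0 y Hy) as [m [Hm [Hmj ->]]].
      split; [exists m; auto|]. intros E; apply Hmj; apply Hinj; auto. }
    assert (HS0B : base_subset L k B S0).
    { split.
      - split; [apply cl_subspace|split].
        + exists X0. split; [simpl; rewrite length_map, HMlen; reflexivity| intros z; tauto].
        + intros l' Hl'. destruct (le_lt_dec (S k) (length l')) as [?|Hlt]; auto. exfalso.
          destruct Hdim as [_ [_ Hmin]].
          assert (Hall : same_set (closure L (fun z => In z (l' ++ C))) (fun _ => True)).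
          { intros z. split; auto. intros _. apply (cl_sub L B); [|apply HBspan; exact I].
            intros y [m [Hm ->]].
            assert (HX0cl : forall w, In w X0 -> closure L (fun z => In z (l' ++ C)) w).
            { intros w Hw. apply (cl_mono L (fun z => In z l')); [intros v Hv; apply in_or_app; auto|].
              apply (proj2 (Hl' w)). apply cl_ext; auto. }
            destruct (Nat.eq_dec m i) as [->|Hmi]; [apply HX0cl; left; auto|].
            destruct (Nat.eq_dec m j) as [->|Hmj]; [apply cl_ext; apply in_or_app; right; left; auto|].
            assert (Hmo : In m others) by (apply Hoth; auto).
            apply HMr in Hmo. destruct Hmo as [Hmo|Hmo].
            - apply HX0cl. right. apply in_map; auto.
            - apply cl_ext. apply in_or_app. right. right. apply in_map; auto. }
          assert (Hle := Hmin _ Hall). rewrite length_app in Hle. simpl in Hle.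
          rewrite length_map, Hrlen in Hle. lia.
      - exists (fun z => In z X0). split; [|intros z; tauto].
        intros y Hy. destruct (HX0 y Hy) as [m [Hm [_ ->]]]. exists m; auto. }
    assert (nS0B' : ~ base_subset L k B' S0).
    { intros [_ [Y [HYB' HYS]]].
      destruct (classic (Y q)) as [Yq|nYq].
      - apply nS0j. apply (line_in L S0 (p i) q (p j) l (cl_subspace L _)); auto.
        apply (proj1 (HYS q)). apply cl_ext; auto.
      - apply (indepB i Y Hi); [|apply (proj2 (HYS _)); exact S0i].
        intros y Hy. destruct (HYB' y Hy) as [[m [Hm [Hmi ->]]]| ->]; [|contradiction].
        split; [exists m; auto|]. intros E; apply Hmi; apply Hinj; auto. }
    apply nS0B'. refine (proj2 (Hex B' (conj HB'ind (fun z => conj (fun _ => I) (fun _ => HB'cl z))) HRB' S0) HS0B).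
  - intros HS B' [HB'ind HB'span] HRB' S.
    assert (Hin : forall i, i <= n -> B' (p i)).
    { intros i Hi.
      destruct (finitary L B' (p i) (proj2 (HB'span _) I)) as [F0 [HF0 HF0x]].
      destruct (meet L Hexch B' (fun S => R S /\ S (p i)) (p i) HB'ind (fun S HS => proj2 HS)
                  (fun S HS => proj2 (HRB' S (proj1 HS))) (length F0) F0 (le_n _) HF0 HF0x)
        as [F [HF [HFx HFT]]].
      destruct F as [|f F].
      - exfalso. apply (cl_empty L _ (p i) (fun z (H : In z nil) => H) HFx).
      - assert (Hf : f = p i).
        { apply (proj1 (HS i Hi f)). intros S' RS' S'i. apply (HFT S' (conj RS' S'i)).
          apply cl_ext. left; auto. }
        rewrite <- Hf. apply HF. left; auto. }
    assert (Hout : forall z, B' z -> B z).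
    { intros z Hz. apply NNPP. intros nBz. apply (HB'ind B).
      - intros y [m [Hm ->]]; apply Hin; auto.
      - exists z; auto.
      - intros w. split; intros _; [apply HB'span; exact I| apply HBspan; exact I]. }
    split; intros [Hd [Y [HY HYS]]]; split; auto; exists Y; split; auto; intros y Hy.
    + apply Hout; auto.
    + destruct (HY y Hy) as [m [Hm ->]]; apply Hin; auto.
Qed.
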